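(* Let $X_1,X_2$ be Banach spaces and let $\Phi$ be a Young function satisfying the Mulholland condition. Then the $F$-space $(X_1\oplus X_2,d_\Phi)$ has the Hahn–Banach extension property: for every closed subspace $M$ and every continuous linear functional $\varphi:M\to\mathbb C$ there is a continuous linear functional $\varphi':X_1\oplus X_2\to\mathbb C$ with $\varphi'|_M=\varphi$.
   Context: A Young function is a convex, left semicontinuous, even $\Phi:\mathbb R\to[0,\infty]$ with $\Phi(0)=0$, $\lim_{x\to\infty}\Phi(x)=\infty$; it satisfies the Mulholland condition if it is continuous and strictly increasing on $[0,\infty)$ and $\log\Phi(x)$ is convex as a function of $\log x$. The metric is $d_\Phi((x_1,x_2),(y_1,y_2))=\Phi^{-1}(\Phi(\|x_1-y_1\|)+\Phi(\|x_2-y_2\|))$, where $\Phi^{-1}$ is the inverse of $\Phi|_{[0,\infty)}$. *)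

(* Defs.v *)
From mathcomp Require Import all_boot all_order all_algebra.
From mathcomp Require Import all_classical all_reals all_analysis.
From mathcomp Require Export complex.
Import Order.TTheory GRing.Theory Num.Theory numFieldNormedType.Exports.

Set Implicit Arguments.
Unset Strict Implicit.
Unset Printing Implicit Defensive.

Local Open Scope classical_set_scope.
Local Open Scope ring_scope.

Section Young.
Variable R : realType.
Implicit Types (Phi : R -> \bar R).

Definition young_function Phi : Prop :=
  [/\ (forall x, (0 <= Phi x)%E) /\ Phi 0 = 0%E,
      (forall x y (l : R), 0 < l < 1 ->
         (Phi (l * x + (1 - l) * y)%R <= l%:E * Phi x + (1 - l)%:E * Phi y)%E),
      lower_semicontinuous Phi,
      (forall x, Phi (- x) = Phi x) &
      (forall M : R, exists N : R, forall x, N < x -> (M%:E < Phi x)%E)].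

Definition mulholland Phi : Prop :=
  [/\ {within `[0, +oo[, continuous Phi},
      (forall x y, 0 <= x -> x < y -> (Phi x < Phi y)%E) &
      (forall s t (l : R), 0 <= l <= 1 ->
         ln (fine (Phi (expR (l * s + (1 - l) * t))))
           <= l * ln (fine (Phi (expR s))) + (1 - l) * ln (fine (Phi (expR t))))].

Definition Phi_inv Phi (y : \bar R) : R := xget 0 [set t | 0 <= t /\ Phi t = y].

End Young.

Section DPhi.
Variables (R : realType) (X1 X2 : normedModType R[i]).

(* the real-valued norm (the norm of a normedModType over R[i] is valued in R[i]
   and is a nonnegative real, we take its real part). *)
Definition rnorm (X : normedModType R[i]) (x : X) : R := complex.Re `|x|.

Definition dPhi (Phi : R -> \bar R) (x y : (X1 * X2)%type) : R :=
  Phi_inv Phi (Phi (rnorm (x.1 - y.1)%R) + Phi (rnorm (x.2 - y.2)%R))%E.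

Definition lin_subspace (M : set (X1 * X2)%type) : Prop :=
  M 0 /\ forall (a : R[i]) x y, M x -> M y -> M (a *: x + y).

Definition d_closed (d : (X1 * X2)%type -> (X1 * X2)%type -> R)
  (M : set (X1 * X2)%type) : Prop :=
  forall x, (forall e : R, 0 < e -> exists y, M y /\ d x y < e) -> M x.

Definition linear_on (M : set (X1 * X2)%type) (phi : (X1 * X2)%type -> R[i]) : Prop :=
  forall (a : R[i]) x y, M x -> M y -> phi (a *: x + y) = a * phi x + phi y.

Definition d_continuous_on (d : (X1 * X2)%type -> (X1 * X2)%type -> R)
  (M : set (X1 * X2)%type) (phi : (X1 * X2)%type -> R[i]) : Prop :=
  forall x, M x -> forall e : R, 0 < e -> exists2 del : R, 0 < del &
    forall y, M y -> d x y < del -> complex.Re `|phi y - phi x| < e.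

End DPhi.

(* Main.v *)
Require Import Defs.
From mathcomp Require Import all_boot all_order all_algebra.
From mathcomp Require Import all_classical all_reals all_analysis.
From mathcomp Require Import complex.
From mathcomp Require Import ring lra.
Import Order.TTheory GRing.Theory Num.Theory numFieldNormedType.Exports.
Local Open Scope classical_set_scope.
Local Open Scope ring_scope.
Set Implicit Arguments.
Unset Strict Implicit.
Unset Printing Implicit Defensive.
Section PhiProps.
Variables (R : realType) (Phi : R -> \bar R).
Hypotheses (hY : young_function Phi) (hM : mulholland Phi).

Lemma Phi_ge0 x : (0 <= Phi x)%E.
Proof. by case: hY => [[+ _] _ _ _ _]; apply. Qed.

Lemma Phi0 : Phi 0 = 0%E.
Proof. by case: hY => [[_ +] _ _ _ _]. Qed.

Lemma PhiN x : Phi (- x) = Phi x.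
Proof. by case: hY => _ _ _ + _; apply. Qed.

Lemma Phi_lt x y : 0 <= x -> x < y -> (Phi x < Phi y)%E.
Proof. by case: hM => _ + _; apply. Qed.

Lemma Phi_fin x : Phi x \is a fin_num.
Proof.
wlog x0 : x / 0 <= x.
  move=> H; have [/H//|x0] := leP 0 x.
  by rewrite -PhiN; apply: H; rewrite oppr_ge0 ltW.
have h1 : x < x + 1 by rewrite ltrDl.
have := Phi_lt x0 h1; have := Phi_ge0 x.
case: (Phi x) => [r| |] //=.
  by move=> _; rewrite ltNge leey.
Qed.

Lemma PhiE x : Phi x = (fine (Phi x))%:E.
Proof. by rewrite fineK // Phi_fin. Qed.

Lemma Phi_le x y : 0 <= x -> 0 <= y -> (Phi x <= Phi y)%E -> x <= y.
Proof.
move=> x0 y0 h; rewrite leNgt; apply/negP => yx.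
by have := Phi_lt y0 yx; rewrite ltNge h.
Qed.

Lemma Phi_mono x y : 0 <= x -> x <= y -> (Phi x <= Phi y)%E.
Proof.
move=> x0; rewrite le_eqVlt => /orP[/eqP->//|xy].
exact/ltW/Phi_lt.
Qed.

Lemma Phi_cont : {within `[0, +oo[, continuous Phi}.
Proof. by case: hM. Qed.

Lemma Phi_exists (v : R) : 0 <= v -> exists t, 0 <= t /\ Phi t = v%:E.
Proof.
move=> v0; case: hY => _ _ _ _ /(_ v) [N HN].
pose b := Num.max N 0 + 1.
have b0 : 0 <= b by rewrite addr_ge0 // le_max lexx orbT.
have Nb : N < b by rewrite ltr_pwDr // le_max lexx.
have := HN _ Nb; rewrite (PhiE b) lte_fin => vb.
have gc : {within `[0, b], continuous (fine \o Phi)}.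
  have sub : `[0, b]%classic `<=` `[0, +oo[%classic.
    by move=> z /=; rewrite !in_itv /= andbT => /andP[].
  apply: (continuous_subspaceW sub).
  intro z; have := Phi_cont (x:=z).
  rewrite /continuous_at /from_subspace /= => h.
  by apply: fine_cvg; rewrite -PhiE.
have [|c c0 e] := @IVT _ _ 0 b v b0 gc.
  by rewrite /= Phi0 /= ge_min le_max v0 (ltW vb) orbT.
exists c; split; first by move: c0; rewrite in_itv /= => /andP[].
by rewrite PhiE; move: e => /= ->.
Qed.


Lemma g_ge0 x : 0 <= fine (Phi x).
Proof. by have := Phi_ge0 x; rewrite PhiE lee_fin. Qed.

Lemma g_lt x y : 0 <= x -> x < y -> fine (Phi x) < fine (Phi y).
Proof. by move=> x0 xy; have := Phi_lt x0 xy; rewrite (PhiE x) (PhiE y) lte_fin. Qed.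

Lemma g_le x y : 0 <= x -> 0 <= y -> fine (Phi x) <= fine (Phi y) -> x <= y.
Proof.
move=> x0 y0 h; rewrite leNgt; apply/negP => yx.
by have := g_lt y0 yx; rewrite ltNge h.
Qed.

Lemma g_conv x y l : 0 < l < 1 ->
  fine (Phi (l * x + (1 - l) * y)) <= l * fine (Phi x) + (1 - l) * fine (Phi y).
Proof.
case: hY => _ + _ _ _ => /(_ x y l) h /h.
by rewrite (PhiE x) (PhiE y) (PhiE (l * x + (1 - l) * y)) -!EFinM -EFinD lee_fin.
Qed.

Lemma g0 : fine (Phi 0) = 0.
Proof. by rewrite Phi0. Qed.

Lemma Phi_inv_sum a b : 0 <= a -> 0 <= b ->
  let t := Phi_inv Phi (Phi a + Phi b)%E in
  0 <= t /\ fine (Phi t) = fine (Phi a) + fine (Phi b).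
Proof.
move=> a0 b0 t.
have [s [s0 es]] := Phi_exists (addr_ge0 (g_ge0 a) (g_ge0 b)).
have ex : exists s, [set t | 0 <= t /\ Phi t = (Phi a + Phi b)%E] s.
  by exists s; split => //; rewrite es EFinD -!PhiE.
have [t0 et] := xgetPex 0 ex; split => //.
by rewrite /t et (PhiE a) (PhiE b).
Qed.

Lemma Phi_inv_ge a b : 0 <= a -> 0 <= b ->
  a <= Phi_inv Phi (Phi a + Phi b)%E /\ b <= Phi_inv Phi (Phi a + Phi b)%E.
Proof.
move=> a0 b0; have [t0 et] := Phi_inv_sum a0 b0.
split; apply: g_le => //; rewrite et.
  by rewrite lerDl g_ge0.
by rewrite lerDr g_ge0.
Qed.

Lemma Phi_inv_small del : 0 < del -> exists2 eta, 0 < eta &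
  forall a b, 0 <= a -> 0 <= b -> a <= eta -> b <= eta ->
  Phi_inv Phi (Phi a + Phi b)%E < del.
Proof.
move=> d0; exists (del / 4); first by rewrite divr_gt0.
move=> a b a0 b0 ae be; have [t0 et] := Phi_inv_sum a0 b0.
have l01 : 0 < (4^-1 : R) < 1.
  by rewrite invr_gt0 ltr0n /= invf_lt1 // ltr1n.
have hc := g_conv del 0 l01.
rewrite mulr0 addr0 g0 mulr0 addr0 mulrC in hc.
have ga : fine (Phi a) <= fine (Phi (del / 4)).
  by have := Phi_mono a0 ae; rewrite (PhiE a) (PhiE (del/4)) lee_fin.
have gb : fine (Phi b) <= fine (Phi (del / 4)).
  by have := Phi_mono b0 be; rewrite (PhiE b) (PhiE (del/4)) lee_fin.
have gd : 0 < fine (Phi del) by rewrite -g0; apply: g_lt.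
rewrite ltNge; apply/negP => dt.
have := Phi_mono (ltW d0) dt; rewrite (PhiE del) (PhiE (Phi_inv _ _)) lee_fin et.
apply/negP; rewrite -ltNge.
have -> : fine (Phi del) = 4 * (fine (Phi del) / 4) by rewrite mulrC divfK.
lra.
Qed.

End PhiProps.
Section HB.
Variables (R : realType) (V : lmodType R[i]).

Definition rsc (r : R) (x : V) : V := (real_complex R r) *: x.

Lemma rsc0 x : rsc 0 x = 0. Proof. by rewrite /rsc rmorph0 scale0r. Qed.
Lemma rsc1 x : rsc 1 x = x. Proof. by rewrite /rsc rmorph1 scale1r. Qed.
Lemma rscx0 r : rsc r 0 = 0. Proof. by rewrite /rsc scaler0. Qed.
Lemma rscD r x y : rsc r (x + y) = rsc r x + rsc r y. Proof. by rewrite /rsc scalerDr. Qed.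
Lemma rscDl r s x : rsc (r + s) x = rsc r x + rsc s x. Proof. by rewrite /rsc rmorphD scalerDl. Qed.
Lemma rscA r s x : rsc r (rsc s x) = rsc (r * s) x. Proof. by rewrite /rsc rmorphM scalerA. Qed.
Lemma rscN r x : rsc (- r) x = - rsc r x. Proof. by rewrite /rsc rmorphN scaleNr. Qed.
Lemma rscxN r x : rsc r (- x) = - rsc r x. Proof. by rewrite /rsc scalerN. Qed.

Variables (p : V -> R) (M : set V) (u : V -> R).
Hypotheses (p_add : forall x y, p (x + y) <= p x + p y)
  (p_hom : forall r x, 0 <= r -> p (rsc r x) = r * p x)
  (M0 : M 0)
  (M_lin : forall r x y, M x -> M y -> M (rsc r x + y))
  (u_lin : forall r x y, M x -> M y -> u (rsc r x + y) = r * u x + u y)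
  (u_le : forall x, M x -> u x <= p x).

Definition good (G : set (V * R)) :=
  [/\ forall x a b, G (x, a) -> G (x, b) -> a = b,
      forall r x y a b, G (x, a) -> G (y, b) -> G (rsc r x + y, r * a + b),
      forall x a, G (x, a) -> a <= p x &
      forall x, M x -> G (x, u x)].

Definition PG (G : set (V * R)) := G = set0 \/ good G.

Lemma PG_good G q : PG G -> G q -> good G.
Proof. by case=> // -> . Qed.

Lemma chain_PG : forall F : set (set (V * R)), F `<=` PG -> total_on F subset ->
  PG (\bigcup_(X in F) X).
Proof.
move=> F FP Ft.
have [allE|] := pselect (forall G, F G -> G = set0).
  left; apply/seteqP; split => q // [G FG]; by rewrite (allE G FG).
move=> /existsNP [G0 /not_implyP [FG0 G0n]].
have gG0 : good G0 by case: (FP _ FG0).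
right; split.
- move=> x a b [G1 F1 h1] [G2 F2 h2].
  have [s12|s21] := Ft _ _ F1 F2.
    by have [f _ _ _] := PG_good (FP _ F2) h2; apply: (f x) => //; apply: s12.
  by have [f _ _ _] := PG_good (FP _ F1) h1; apply: (f x) => //; apply: s21.
- move=> r x y a b [G1 F1 h1] [G2 F2 h2].
  have [s12|s21] := Ft _ _ F1 F2.
    exists G2 => //.
    by have [_ f _ _] := PG_good (FP _ F2) h2; apply: f => //; apply: s12.
  exists G1 => //.
  by have [_ f _ _] := PG_good (FP _ F1) h1; apply: f => //; apply: s21.
- move=> x a [G1 F1 h1].
  by have [_ _ f _] := PG_good (FP _ F1) h1; apply: f.
- by move=> x Mx; exists G0 => //; case: gG0 => _ _ _; apply.
Qed.

Lemma good00 G : good G -> G (0, 0).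
Proof.
case=> _ lin _ ext; have h := lin (-1) _ _ _ _ (ext _ M0) (ext _ M0).
by rewrite rscN rsc1 addNr mulN1r addNr in h.
Qed.

Lemma good_comb G k m x y a b : good G -> G (x, a) -> G (y, b) ->
  G (rsc k x + rsc m y, k * a + m * b).
Proof.
move=> gG hx hy; have [_ lin _ _] := gG.
have h1 := lin m _ _ _ _ hy (good00 gG); rewrite !addr0 in h1.
exact: lin.
Qed.

Lemma good_scale G k x a : good G -> G (x, a) -> G (rsc k x, k * a).
Proof.
move=> gG hx; have [_ lin _ _] := gG.
by have := lin k _ _ _ _ hx (good00 gG); rewrite !addr0.
Qed.

Section Ext.
Variables (A : set (V * R)) (gA : good A) (z : V) (nz : forall a, ~ A (z, a)).

Let S := [set s | exists y b, A (y, b) /\ s = b - p (y - z)].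
Let c := sup S.

Let S_ub y' b' : A (y', b') -> ubound S (p (y' + z) - b').
Proof.
move=> hy' s [y [b [hy ->]]].
have [_ lin le _] := gA.
have h := le _ _ (lin 1 _ _ _ _ hy hy'); rewrite rsc1 mul1r in h.
have h2 := p_add (y - z) (y' + z).
have e : y - z + (y' + z) = y + y' by rewrite addrACA addNr addr0.
rewrite e in h2; lra.
Qed.

Let c_ge y b : A (y, b) -> b - p (y - z) <= c.
Proof.
move=> hy; apply: ub_le_sup; last by exists y, b.
by exists (p (0 + z) - 0); apply: S_ub; apply: good00.
Qed.

Let c_le y b : A (y, b) -> c <= p (y + z) - b.
Proof.
move=> hy; apply: ge_sup; last exact: S_ub.
by exists (0 - p (0 - z)), 0, 0; split => //; apply: good00.
Qed.

Let B := [set q | exists y b t, A (y, b) /\ q = (y + rsc t z, b + t * c)].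

Lemma B_good : good B.
Proof.
have [fA lin le ext] := gA.
split.
- move=> x a1 a2 [y1 [b1 [t1 [h1 /pair_equal_spec [e1 e1']]]]] [y2 [b2 [t2 [h2 /pair_equal_spec [e2 e2']]]]].
  have tt : t1 = t2.
    have [//|tn] := eqVneq t1 t2; exfalso.
    have d : t1 - t2 != 0 by rewrite subr_eq0.
    suff hz : A (z, (t1 - t2)^-1 * b2 + (- (t1 - t2)^-1) * b1) by exact: (nz hz).
    have -> : z = rsc ((t1 - t2)^-1) y2 + rsc (- (t1 - t2)^-1) y1.
      have e : rsc (t1 - t2) z = y2 - y1.
        have e12 : rsc t1 z = y2 - y1 + rsc t2 z.
          by rewrite addrAC -e2 e1 addrAC subrr add0r.
        by rewrite rscDl rscN e12 addrK.
      rewrite rscN -rscxN -rscD -e rscA mulVf // rsc1 //.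
    exact: good_comb.
  subst t2; have yy : y1 = y2.
    by apply: (addIr (rsc t1 z)); rewrite -e1 -e2.
  subst y2; rewrite e1' e2' (fA _ _ _ h1 h2) //.
- move=> r x y a b [y1 [b1 [t1 [h1 [-> ->]]]]] [y2 [b2 [t2 [h2 [-> ->]]]]].
  exists (rsc r y1 + y2), (r * b1 + b2), (r * t1 + t2); split; first exact: lin.
  congr (_, _); last by ring.
  rewrite rscD rscA rscDl; rewrite addrACA //.
- move=> x a [y [b [t [h [-> ->]]]]].
  have [t0|t0|t0] := ltgtP t 0.
  + pose s := - t; have s0 : 0 < s by rewrite /s oppr_gt0.
    have hk := good_scale s^-1 gA h.
    have := c_ge hk.
    have e : y + rsc t z = rsc s (rsc s^-1 y - z).
      by rewrite rscD rscA mulfV ?gt_eqF // rsc1 rscxN /s rscN opprK.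
    rewrite e (p_hom _ (ltW s0)) => hc.
    have : s * (s^-1 * b - p (rsc s^-1 y - z)) <= s * c by rewrite ler_pM2l.
    rewrite mulrBr mulrA mulfV ?gt_eqF // mul1r /s; lra.
  + have hk := good_scale t^-1 gA h.
    have := c_le hk.
    have e : y + rsc t z = rsc t (rsc t^-1 y + z).
      by rewrite rscD rscA mulfV ?gt_eqF // rsc1.
    rewrite e (p_hom _ (ltW t0)) => hc.
    have : t * c <= t * (p (rsc t^-1 y + z) - t^-1 * b) by rewrite ler_pM2l.
    rewrite mulrBr mulrA mulfV ?gt_eqF // mul1r; lra.
  + by rewrite t0 rsc0 addr0 mul0r addr0; apply: le.
- move=> x Mx; exists x, (u x), 0; split; first exact: ext.
  by rewrite rsc0 mul0r !addr0.
Qed.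

Lemma B_proper : A `<` B.
Proof.
split.
  move=> [y b] h; exists y, b, 0; split => //.
  by rewrite rsc0 mul0r !addr0.
move=> sub; apply: (@nz c); apply: sub.
exists 0, 0, 1; split; first exact: good00.
by rewrite rsc1 mul1r !add0r.
Qed.

End Ext.

Lemma hahn_banach_real : exists U : V -> R,
  [/\ forall r x y, U (rsc r x + y) = r * U x + U y,
      forall x, U x <= p x &
      forall x, M x -> U x = u x].
Proof.
have [A [PA Amax]] := Zorn_bigcup chain_PG.
pose G0 := [set q : V * R | M q.1 /\ q.2 = u q.1].
have gG0 : good G0.
  split.
  - by move=> x a b [_ /= ->] [_ /= ->].
  - move=> r x y a b [/= Mx ->] [/= My ->]; split => /=; first exact: M_lin.
    by rewrite u_lin.
  - by move=> x a [/= Mx ->]; apply: u_le.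
  - by move=> x Mx; split.
have gA : good A.
  case: PA => // A0; exfalso; apply: (Amax G0); last by right.
  rewrite A0; split; first by [].
  by move=> /(_ (0, u 0)) h; have := h (conj M0 erefl).
have tot : forall z, exists a, A (z, a).
  move=> z; apply/not_existsP => nz.
  exact: (Amax _ (B_proper gA nz) (or_intror (B_good gA nz))).
pose U z := xget 0 [set a | A (z, a)].
have AU z : A (z, U z) by apply: xgetPex (tot z).
have [fA lin le ext] := gA.
exists U; split.
- by move=> r x y; apply: (fA (rsc r x + y)) => //; apply: lin.
- by move=> x; apply: le.
- by move=> x Mx; apply: (fA x) => //; apply: ext.
Qed.

End HB.
Section CNorm.
Variable R : realType.

Lemma ReD (a b : R[i]) : complex.Re (a + b) = complex.Re a + complex.Re b.
Proof. by case: a; case: b. Qed.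

Lemma ReMc (a b : R[i]) : complex.Im b = 0 -> complex.Re (a * b) = complex.Re a * complex.Re b.
Proof. by case: a; case: b => br bi ar ai /= ->; rewrite mulr0 subr0. Qed.

Lemma Re_le_norm (z : R[i]) : `|complex.Re z| <= complex.Re `|z|.
Proof. by have := normc_ge_Re z; rewrite lecE => /andP[]. Qed.

Lemma norm_le_ReIm (z : R[i]) :
  complex.Re `|z| <= `|complex.Re z| + `|complex.Im z|.
Proof.
rewrite normc_def /=.
set a := complex.Re z; set b := complex.Im z.
rewrite -(ger0_norm (addr_ge0 (normr_ge0 a) (normr_ge0 b))) -sqrtr_sqr.
rewrite ler_sqrt ?sqr_ge0 //.
have ha : a ^+ 2 = `|a| ^+ 2 by rewrite real_normK ?num_real.
have hb : b ^+ 2 = `|b| ^+ 2 by rewrite real_normK ?num_real.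
rewrite ha hb; have := normr_ge0 a; have := normr_ge0 b; nra.
Qed.

Variable X : normedModType R[i].

Lemma Im_norm (x : X) : complex.Im `|x| = 0.
Proof. by apply: ger0_Im. Qed.

Lemma rnorm_ge0 (x : X) : 0 <= rnorm x.
Proof. by have := normr_ge0 x; rewrite lecE => /andP[]. Qed.

Lemma rnormD (x y : X) : rnorm (x + y) <= rnorm x + rnorm y.
Proof. by have := ler_normD x y; rewrite lecE -ReD => /andP[]. Qed.

Lemma rnormZ (c : R[i]) (x : X) : rnorm (c *: x) = complex.Re `|c| * rnorm x.
Proof. by rewrite /rnorm normrZ ReMc // Im_norm. Qed.

Lemma rnormN (x : X) : rnorm (- x) = rnorm x.
Proof. by rewrite /rnorm normrN. Qed.

Lemma rnormB (x y : X) : rnorm (x - y) = rnorm (y - x).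
Proof. by rewrite -rnormN opprB. Qed.

Lemma Re_norm_real (r : R) : 0 <= r -> complex.Re `|(real_complex R r)| = r.
Proof. by move=> r0; rewrite ger0_norm // ler0c. Qed.

Lemma Re_norm_i : complex.Re `|('i%C : R[i])| = 1.
Proof. by rewrite normc_def /= expr0n expr1n add0r sqrtr1. Qed.

End CNorm.

Lemma cmulE (R : realType) (a b c d : R) :
  (Complex a b : R[i]) * Complex c d = Complex (a * c - b * d) (a * d + b * c).
Proof. by []. Qed.

Lemma caddE (R : realType) (a b c d : R) :
  (Complex a b : R[i]) + Complex c d = Complex (a + c) (b + d).
Proof. by []. Qed.

Theorem mainTheorem6 (R : realType) (X1 X2 : completeNormedModType R[i])
  (Phi : R -> \bar R) :
  young_function Phi -> mulholland Phi ->
  forall (M : set (X1 * X2)%type) (phi : (X1 * X2)%type -> R[i]),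
    lin_subspace M -> d_closed (dPhi Phi) M ->
    linear_on M phi -> d_continuous_on (dPhi Phi) M phi ->
    exists phi' : (X1 * X2)%type -> R[i],
      [/\ linear_on setT phi', d_continuous_on (dPhi Phi) setT phi' &
          forall x, M x -> phi' x = phi x].
Proof.
move=> hY hM M phi [M0 Mlin] Mcl philin phicont.
have phi0 : phi 0 = 0.
  have := philin 1 0 0 M0 M0; rewrite scale1r addr0 mul1r.
  by rewrite -{1}(addr0 (phi 0)) => /addrI ->.
have [del d0 Hd] := phicont 0 M0 1 ltr01.
have [eta e0 He] := Phi_inv_small hY hM d0.
have bnd : forall y, M y ->
    `|complex.Re (phi y)| <= (rnorm y.1 + rnorm y.2) / eta.
  move=> y My; set N := rnorm y.1 + rnorm y.2.
  have N0 : 0 <= N by rewrite addr_ge0 // rnorm_ge0.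
  apply/ler_addgt0Pr => r r0.
  have Nr : 0 < N + r * eta by rewrite ltr_wpDl // mulr_gt0.
  pose lam := eta / (N + r * eta).
  have lam0 : 0 < lam by rewrite divr_gt0.
  have lamN : lam * N <= eta.
    rewrite /lam mulrAC ler_pdivrMr // ler_pM2l //.
    by rewrite lerDl mulr_ge0 // ltW.
  have My' : M ((real_complex R lam) *: y).
    by have := Mlin (real_complex R lam) y 0 My M0; rewrite addr0.
  have hd : dPhi Phi 0 ((real_complex R lam) *: y) < del.
    rewrite /dPhi /=; apply: He; rewrite ?rnorm_ge0 //.
      rewrite sub0r rnormN rnormZ (Re_norm_real (ltW lam0)).
      apply: (le_trans _ lamN); rewrite ler_pM2l // /N lerDl rnorm_ge0 //.
    rewrite sub0r rnormN rnormZ (Re_norm_real (ltW lam0)).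
    apply: (le_trans _ lamN); rewrite ler_pM2l // /N lerDr rnorm_ge0 //.
  have := Hd _ My' hd.
  have -> : phi ((real_complex R lam) *: y) = (real_complex R lam) * phi y.
    by have := philin (real_complex R lam) y 0 My M0; rewrite !addr0 phi0 addr0.
  rewrite phi0 subr0 normrM ReMc ?Im_norm // (Re_norm_real (ltW lam0)) => h.
  have h2 := Re_le_norm (phi y).
  have : `|complex.Re (phi y)| < lam^-1.
    apply: (le_lt_trans h2); rewrite -(ltr_pM2l lam0) mulfV ?gt_eqF //.
  have -> : lam^-1 = N / eta + r by rewrite /lam invf_div; field; rewrite gt_eqF.
  by move/ltW.
pose p := fun w : (X1 * X2)%type => (rnorm w.1 + rnorm w.2) / eta.
pose u := fun w : (X1 * X2)%type => complex.Re (phi w).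
have padd : forall x y, p (x + y) <= p x + p y.
  move=> x y; rewrite /p -mulrDl ler_pM2r ?invr_gt0 //.
  have := rnormD x.1 y.1; have := rnormD x.2 y.2; rewrite /=; lra.
have phom : forall r x, 0 <= r -> p (rsc r x) = r * p x.
  move=> r x r0; rewrite /p /rsc /= !rnormZ Re_norm_real //.
  by rewrite mulrA mulrDr.
have Mlin' : forall r x y, M x -> M y -> M (rsc r x + y).
  by move=> r x y; apply: Mlin.
have ulin : forall r x y, M x -> M y -> u (rsc r x + y) = r * u x + u y.
  move=> r x y Mx My; rewrite /u /rsc philin //.
  by case: (phi x) => a b; case: (phi y) => c d /=; rewrite mul0r subr0.
have ule : forall x, M x -> u x <= p x.
  by move=> x Mx; apply: le_trans (bnd x Mx); apply: ler_norm.
have [U [Ulin Ule Uext]] := @hahn_banach_real R _ p M u padd phom M0 Mlin' ulin ule.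
have U0 : U 0 = 0.
  have := Ulin 1 0 0; rewrite rsc1 addr0 mul1r.
  by rewrite -{1}(addr0 (U 0)) => /addrI ->.
have UD : forall x y, U (x + y) = U x + U y.
  by move=> x y; have := Ulin 1 x y; rewrite rsc1 mul1r.
have UZ : forall r x, U (rsc r x) = r * U x.
  by move=> r x; have := Ulin r x 0; rewrite !addr0 U0 addr0.
have UN : forall x, U (- x) = - U x.
  by move=> x; have := UZ (-1) x; rewrite rscN rsc1 mulN1r.
have pN : forall w, p (- w) = p w by move=> w; rewrite /p /= !rnormN.
have pI : forall w, p ('i%C *: w) = p w.
  by move=> w; rewrite /p /= !rnormZ Re_norm_i !mul1r.
have Uabs : forall w, `|U w| <= p w.
  move=> w; rewrite ler_norml Ule andbT lerNl -UN -pN; exact: Ule.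
have UC : forall a x, U (a *: x) = complex.Re a * U x + complex.Im a * U ('i%C *: x).
  move=> a x.
  have -> : a *: x = rsc (complex.Re a) x + rsc (complex.Im a) ('i%C *: x).
    rewrite /rsc scalerA -scalerDl; congr (_ *: _).
    by case: a => ar ai /=; congr Complex; ring.
  by rewrite UD !UZ.
pose phi' := fun w : (X1 * X2)%type => Complex (U w) (- U ('i%C *: w)).
have phi'lin : linear_on setT phi'.
  move=> a x y _ _; rewrite /phi' UD (UC a x) scalerDr UD scalerA (UC ('i%C * a) x).
  case: a => ar ai; rewrite !cmulE !caddE /=; congr Complex; ring.
exists phi'; split => //.
- move=> x _ e ep; exists (e * eta / 4); first by rewrite !mulr_gt0.
  move=> y _ hd.
  have [h1 h2] := Phi_inv_ge hY hM (rnorm_ge0 (x.1 - y.1)) (rnorm_ge0 (x.2 - y.2)).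
  rewrite /dPhi in hd.
  have -> : phi' y - phi' x = phi' (y - x).
    have := phi'lin (-1) x y I I; rewrite scaleN1r mulN1r addrC => ->.
    by rewrite addrC.
  apply: (le_lt_trans (norm_le_ReIm _)); rewrite /phi' /= normrN.
  have hp : p (y - x) < e / 2.
    rewrite /p /= [rnorm (y.1 - x.1)]rnormB [rnorm (y.2 - x.2)]rnormB.
    rewrite ltr_pdivrMr //.
    have -> : e / 2 * eta = e * eta / 4 + e * eta / 4 by field.
    by apply: ltrD; apply: le_lt_trans hd.
  have := Uabs (y - x); have := Uabs ('i%C *: (y - x)); rewrite pI; lra.
- move=> x Mx; rewrite /phi' Uext // Uext; last first.
    by have := Mlin 'i%C x 0 Mx M0; rewrite addr0.
  rewrite /u.
  have -> : phi ('i%C *: x) = 'i%C * phi x.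
    by have := philin 'i%C x 0 Mx M0; rewrite !addr0 phi0 addr0.
  by case: (phi x) => a b /=; congr Complex; ring.
Qed.
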